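(* Let ${\tt G}$ be a digraph, $P\subseteq SSG({\tt G})$ a downward closed (or upward closed) sub-poset, $\mathbf A$ an additive category and $\mathcal F\colon\mathbf P\to\mathbf A$ a covariant functor. Then the cochain complex $(C^*_{\mathcal F}(P),d^* )$ does not depend, up to isomorphism of cochain complexes, on the choice of the sign assignment on $P$ used to define it.
   Context: A digraph ${\tt G}=(V,E)$ has finite $V$ and $E\subseteq(V\times V)\setminus\{(v,v)\}$. $SSG({\tt G})$ is the poset of spanning subgraphs (all vertices, any subset of edges) ordered by inclusion of edge sets; in it ${\tt H}\prec{\tt H}'$ (covering) iff ${\tt H}'$ has exactly one more edge. A sub-poset $P$ is downward closed if $h\le h'\in P$ implies $h\in P$, upward closed if $P\ni h'\le h$ implies $h\in P$. A sign assignment on $P$ assigns $\epsilon({\tt H},{\tt H}')\in\mathbb Z_2$ to each covering pair in $P$ so that around every square ${\tt H}\prec{\tt H}_1,{\tt H}_2\prec{\tt H}''$ ($ {\tt H}_1\neq{\tt H}_2$) one has $\epsilon({\tt H},{\tt H}_1)+\epsilon({\tt H}_1,{\tt H}'')\equiv\epsilon({\tt H},{\tt H}_2)+\epsilon({\tt H}_2,{\tt H}'')+1\pmod 2$. $\mathbf P$ is the category with objects the elements of $P$ and a unique morphism ${\tt H}\to{\tt H}'$ iff ${\tt H}\le{\tt H}'$. Given a sign assignment $\epsilon$, $C^n_{\mathcal F}(P)=\bigoplus_{{\tt H}\in P,\ \ell({\tt H})=n}\mathcal F({\tt H})$ with $\ell({\tt H})=\#E({\tt H})-\min_{{\tt H}'\in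 P}\#E({\tt H}')$ and $d^n=\sum_{{\tt H}\prec{\tt H}'\text{ in }P,\ \ell({\tt H})=n}(-1)^{\epsilon({\tt H},{\tt H}')}\mathcal F({\tt H}\prec{\tt H}')$. *)

(* Defs.v *)
From HB Require Import structures.
From mathcomp Require Import all_boot all_order all_algebra.
Set Implicit Arguments. Unset Strict Implicit. Unset Printing Implicit Defensive.
Import GRing.Theory.
Local Open Scope ring_scope.

(* A preadditive category (hom-sets are abelian groups, composition is
   bilinear) equipped with a chosen biproduct for every finite family of
   objects (indexed by a finite type; the empty family gives a zero object).
   Composition is written in diagrammatic order: [comp f g] = "g after f". *)
Record additiveCat := AdditiveCat {
  Ob : Type;
  Hom : Ob -> Ob -> zmodType;
  idm : forall a, Hom a a;
  comp : forall a b c, Hom a b -> Hom b c -> Hom a c;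
  compA : forall a b c d (f : Hom a b) (g : Hom b c) (h : Hom c d),
      comp (comp f g) h = comp f (comp g h);
  comp1m : forall a b (f : Hom a b), comp (idm a) f = f;
  compm1 : forall a b (f : Hom a b), comp f (idm b) = f;
  compDl : forall a b c (f g : Hom a b) (h : Hom b c),
      comp (f + g) h = comp f h + comp g h;
  compDr : forall a b c (f : Hom a b) (g h : Hom b c),
      comp f (g + h) = comp f g + comp f h;
  bigob : forall (I : finType), (I -> Ob) -> Ob;
  binj : forall (I : finType) (X : I -> Ob) (i : I), Hom (X i) (bigob X);
  bproj : forall (I : finType) (X : I -> Ob) (i : I), Hom (bigob X) (X i);
  binj_proj : forall (I : finType) (X : I -> Ob) (i : I),
      comp (binj X i) (bproj X i) = idm (X i);
  binj_proj0 : forall (I : finType) (X : I -> Ob) (i j : I), i != j ->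
      comp (binj X i) (bproj X j) = 0;
  bproj_inj_sum : forall (I : finType) (X : I -> Ob),
      \sum_(i : I) comp (bproj X i) (binj X i) = idm (bigob X)
}.
Arguments idm {A} a : rename.
Arguments comp {A a b c} : rename.
Arguments bigob {A I} : rename.
Arguments binj {A I X} i : rename.
Arguments bproj {A I X} i : rename.

(* A digraph on the finite vertex type V is an edge set E : {set V * V}
   without loops; a spanning subgraph is identified with its edge set
   H \subset E, and SSG(G) is ordered by inclusion of edge sets. *)
Definition loopless (V : finType) (E : {set V * V}) : Prop :=
  forall v : V, (v, v) \notin E.

Definition sub_SSG (V : finType) (E : {set V * V}) (P : {set {set V * V}}) :=
  forall H, H \in P -> H \subset E.

Definition downward_closed (V : finType) (E : {set V * V})
    (P : {set {set V * V}}) : Prop :=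
  forall h h' : {set V * V}, h \subset E -> h \subset h' -> h' \in P -> h \in P.

Definition upward_closed (V : finType) (E : {set V * V})
    (P : {set {set V * V}}) : Prop :=
  forall h h' : {set V * V}, h \subset E -> h' \subset h -> h' \in P -> h \in P.

Definition covers (V : finType) (H H' : {set V * V}) : bool :=
  (H \subset H') && (#|H'| == #|H|.+1).

(* sign assignment on P, with values in Z_2 = bool (addition = addb) *)
Definition sign_assignment (V : finType) (P : {set {set V * V}})
    (eps : {set V * V} -> {set V * V} -> bool) : Prop :=
  forall H H1 H2 H'' : {set V * V},
    H \in P -> H1 \in P -> H2 \in P -> H'' \in P ->
    covers H H1 -> covers H H2 -> covers H1 H'' -> covers H2 H'' ->
    H1 != H2 ->
    addb (eps H H1) (eps H1 H'') = addb (addb (eps H H2) (eps H2 H'')) true.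

(* covariant functor P -> A (P viewed as a category, unique morphism
   H -> H' iff H \subset H'); only its values on P matter. *)
Definition is_functor (A : additiveCat) (V : finType) (P : {set {set V * V}})
    (Fob : {set V * V} -> Ob A)
    (Fmor : forall H H' : {set V * V}, Hom (Fob H) (Fob H')) : Prop :=
  (forall H, H \in P -> Fmor H H = idm (Fob H)) /\
  (forall H H' H'', H \in P -> H' \in P -> H'' \in P ->
     H \subset H' -> H' \subset H'' ->
     comp (Fmor H H') (Fmor H' H'') = Fmor H H'').

Definition minlen (V : finType) (P : {set {set V * V}}) : nat :=
  \big[minn/#|[set: V * V]|]_(H in P) #|H|.

Definition ell (V : finType) (P : {set {set V * V}}) (H : {set V * V}) : nat :=
  (#|H| - minlen P)%N.

Definition Idx (V : finType) (P : {set {set V * V}}) (n : nat) :=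
  {H : {set V * V} | (H \in P) && (ell P H == n)}.

Definition cochain (A : additiveCat) (V : finType) (P : {set {set V * V}})
    (Fob : {set V * V} -> Ob A) (n : nat) : Ob A :=
  bigob (fun i : Idx P n => Fob (val i)).

Definition sgn (A : additiveCat) (a b : Ob A) (e : bool) (f : Hom a b) :
  Hom a b := if e then - f else f.

Definition diff (A : additiveCat) (V : finType) (P : {set {set V * V}})
    (Fob : {set V * V} -> Ob A)
    (Fmor : forall H H' : {set V * V}, Hom (Fob H) (Fob H'))
    (eps : {set V * V} -> {set V * V} -> bool) (n : nat) :
    Hom (cochain P Fob n) (cochain P Fob n.+1) :=
  \sum_(i : Idx P n) \sum_(j : Idx P n.+1 | covers (val i) (val j))
     comp (bproj i) (comp (sgn (eps (val i) (val j)) (Fmor (val i) (val j)))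
                          (binj j)).

Definition cochain_iso (A : additiveCat) (C D : nat -> Ob A)
    (d1 : forall n, Hom (C n) (C n.+1)) (d2 : forall n, Hom (D n) (D n.+1))
    : Prop :=
  exists (phi : forall n, Hom (C n) (D n)) (psi : forall n, Hom (D n) (C n)),
    forall n, [/\ comp (phi n) (psi n) = idm (C n),
                  comp (psi n) (phi n) = idm (D n) &
                  comp (phi n) (d2 n) = comp (d1 n) (phi n.+1)].

Arguments is_functor {A V} P Fob Fmor.
Arguments cochain {A V} P Fob n.
Arguments diff {A V} P Fob Fmor eps n.
Arguments cochain_iso {A C D} d1 d2.

(* Main.v *)
Require Import Defs.
From mathcomp Require Import all_boot all_order all_algebra zify.
Set Implicit Arguments. Unset Strict Implicit. Unset Printing Implicit Defensive.

Definition pre (T : finType) (k : nat) (H : {set T}) : {set T} :=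
  [set x in H | enum_rank x < k].

Fixpoint cc (T : finType) (eta : {set T} -> {set T} -> bool) (k : nat)
  (H : {set T}) : bool :=
  match k with
  | 0 => false
  | k.+1 => addb (cc eta k H) ((pre k H != pre k.+1 H) && eta (pre k H) (pre k.+1 H))
  end.

Lemma pre_U1 (T : finType) (e : T) H k :
  pre k (e |: H) = if enum_rank e < k then e |: pre k H else pre k H.
Proof.
case: ifP => he; apply/setP => y; rewrite !inE;
  case: (eqVneq y e) => [->|] //=; by rewrite ?he ?andbF.
Qed.

Lemma pre_sub (T : finType) k (H : {set T}) : pre k H \subset H.
Proof. by apply/subsetP => x; rewrite inE => /andP[]. Qed.

Lemma pre_full (T : finType) (H : {set T}) : pre #|T| H = H.
Proof. by apply/setP => x; rewrite inE ltn_ord andbT. Qed.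

Lemma pre_step (T : finType) k (H : {set T}) :
  pre k.+1 H = pre k H \/
  exists x, [/\ x \in H, x \notin pre k H, (enum_rank x : nat) = k
               & pre k.+1 H = x |: pre k H].
Proof.
case: (boolP [exists x in H, (enum_rank x : nat) == k]).
  case/exists_inP => x xH /eqP xk; right; exists x; split => //.
    by rewrite inE xk ltnn andbF.
  apply/setP => y; rewrite !inE ltnS leq_eqVlt.
  case: (eqVneq y x) => [->|nyx]; first by rewrite xH xk eqxx.
  suff -> : ((enum_rank y : nat) == k) = false by [].
  apply/negbTE; apply: contra nyx => /eqP yk.
  by apply/eqP/enum_rank_inj/val_inj; rewrite /= yk xk.
move=> hn; left; apply/setP => y; rewrite !inE ltnS leq_eqVlt.
case: (boolP (y \in H)) => //= yH.
case: (eqVneq (enum_rank y : nat) k) => //= yk.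
by move: hn; rewrite negb_exists_in => /forall_inP /(_ y yH); rewrite yk eqxx.
Qed.

Lemma covers_U1 (V : finType) (x : V * V) (S : {set V * V}) :
  x \notin S -> covers S (x |: S).
Proof. by move=> xS; rewrite /covers subsetUr cardsU1 xS add1n eqxx. Qed.

Lemma covers_ex (V : finType) (H H' : {set V * V}) :
  covers H H' -> exists e, e \notin H /\ H' = e |: H.
Proof.
case/andP => sub /eqP card.
have : #|H' :\: H| == 1 by rewrite cardsD (setIidPr sub) card subSnn.
case/cards1P => e He.
have eH' : e \in H' :\: H by rewrite He set11.
exists e; split; first by move: eH'; rewrite inE => /andP[].
apply/setP => y; rewrite !inE.
case: (boolP (y \in H)) => yH; first by rewrite orbT (subsetP sub).
rewrite orbF; apply/idP/idP.
  move=> yH'; have : y \in H' :\: H by rewrite inE yH yH'.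
  by rewrite He inE.
by move/eqP ->; move: eH'; rewrite inE => /andP[].
Qed.

Definition square_ok (V : finType) (P : {set {set V * V}})
  (eta : {set V * V} -> {set V * V} -> bool) :=
  forall S S1 S2 S3, S \in P -> S1 \in P -> S2 \in P -> S3 \in P ->
    covers S S1 -> covers S S2 -> covers S1 S3 -> covers S2 S3 -> S1 != S2 ->
    addb (eta S S1) (eta S1 S3) = addb (eta S S2) (eta S2 S3).

Lemma cc_U1 (V : finType) (E : {set V * V}) (P : {set {set V * V}}) eta :
  downward_closed E P -> square_ok P eta ->
  forall (H : {set V * V}) (e : V * V), e \notin H -> e |: H \subset E -> e |: H \in P ->
  forall k, cc eta k (e |: H) =
    addb (cc eta k H) ((enum_rank e < k) && eta (pre k H) (pre k (e |: H))).
Proof.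
move=> dc sq H e eH sE inP.
have inPs : forall S : {set V * V}, S \subset e |: H -> S \in P.
  by move=> S sS; apply: (dc S (e |: H)) => //; apply: subset_trans sE.
elim=> [|k IH] //=; rewrite IH !pre_U1.
case: (ltngtP (enum_rank e) k) => ek.
- rewrite ltnS (ltnW ek) /=.
  case: (pre_step k H) => [->|[x [xH xS xk ->]]].
    by rewrite !eqxx /=; case: (eta _ _); case: (cc _ _ _).
  set S := pre k H.
  have xe : x != e by apply: contraNneq eH => <-.
  have n1 : (S != x |: S).
    by apply: contraNneq xS => h; rewrite -/S h setU11.
  have n2 : (e |: S != e |: (x |: S)).
    apply: contraNneq xS => h; have : x \in e |: (x |: S) by rewrite !inE eqxx orbT.
    by rewrite -h !inE (negbTE xe).
  rewrite n1 n2 /=.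
  have sS : S \subset H by exact: pre_sub.
  have h1 : S \subset e |: H by apply: subset_trans sS (subsetUr _ _).
  have xeS : x \notin e |: S by rewrite in_setU1 (negbTE xe) /=; exact: xS.
  have eS : e \notin S by apply: contra eH; exact: (subsetP sS).
  have exS : e \notin x |: S by rewrite in_setU1 eq_sym (negbTE xe) /=.
  have q := sq S (x |: S) (e |: S) (e |: (x |: S)).
  rewrite -!addbA q ?covers_U1 //.
  + by apply: inPs.
  + have xSH : x |: S \subset H.
      by apply/subsetP => y; rewrite in_setU1 => /orP[/eqP->//|/(subsetP sS)].
    by apply: inPs; apply: subset_trans xSH (subsetUr _ _).
  + by apply: inPs; rewrite setUS.
  + have xSH : x |: S \subset H.
      by apply/subsetP => y; rewrite in_setU1 => /orP[/eqP->//|/(subsetP sS)].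
    by apply: inPs; rewrite setUS.
  + by rewrite setUCA; apply: covers_U1.
  + apply: contraNneq exS => ->; by rewrite setU11.
- by rewrite ltnS leqNgt ek /=; case: (_ && _); case: (cc _ _ _).
- rewrite ek ltnSn /=.
  case: (pre_step k H) => [->|[x [xH xS xk _]]].
    have nS : pre k H != e |: pre k H.
      apply: contraNneq eH => h; have : e \in e |: pre k H by rewrite setU11.
      by rewrite -h => /(subsetP (pre_sub _ _)).
    by rewrite nS eqxx /=; case: (cc _ _ _).
  have : x = e by apply/enum_rank_inj/val_inj; rewrite /= xk ek.
  by move=> xe; move: eH; rewrite -xe xH.
Qed.

Definition cob_ok (V : finType) (P : {set {set V * V}})
  (eta : {set V * V} -> {set V * V} -> bool) (c : {set V * V} -> bool) :=
  forall H H', H \in P -> H' \in P -> covers H H' -> c H' = addb (c H) (eta H H').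

Lemma exists_c_down (V : finType) (E : {set V * V}) (P : {set {set V * V}}) eta :
  downward_closed E P -> sub_SSG E P -> square_ok P eta ->
  exists c, cob_ok P eta c.
Proof.
move=> dc sub sq; exists (cc eta #|{: V * V}|) => H H' HP H'P /covers_ex [e [eH eq]].
move: H'P (sub _ H'P); rewrite eq => H'P sE.
by rewrite (cc_U1 dc sq eH sE H'P) !pre_full ltn_ord.
Qed.

Lemma compl_compl (V : finType) (E H : {set V * V}) :
  H \subset E -> E :\: (E :\: H) = H.
Proof. by move=> sHE; rewrite setDDr setDv set0U (setIidPr sHE). Qed.

Lemma covers_compl (V : finType) (E A B : {set V * V}) :
  A \subset E -> B \subset E -> covers (E :\: B) (E :\: A) = covers A B.
Proof.
move=> sA sB; rewrite /covers.
have -> : (E :\: B \subset E :\: A) = (A \subset B).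
  apply/idP/idP => [h|]; last exact: setDS.
  apply/subsetP => x xA; apply: contraT => xB.
  have : x \in E :\: B by rewrite inE xB (subsetP sA).
  by move/(subsetP h); rewrite inE xA.
rewrite !cardsD (setIidPr sA) (setIidPr sB).
have := subset_leq_card sA; have := subset_leq_card sB.
case: (A \subset B) => //= h1 h2; apply/eqP/eqP; lia.
Qed.

Lemma exists_c_up (V : finType) (E : {set V * V}) (P : {set {set V * V}}) eta :
  upward_closed E P -> sub_SSG E P -> square_ok P eta ->
  exists c, cob_ok P eta c.
Proof.
move=> uc sub sq.
pose P' := [set H : {set V * V} | (H \subset E) && (E :\: H \in P)].
pose eta' := fun H H' : {set V * V} => eta (E :\: H') (E :\: H).
have sDE : forall H : {set V * V}, E :\: H \subset E by move=> H; apply: subsetDl.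
have inP' : forall H, H \in P -> E :\: H \in P'.
  by move=> H HP; rewrite inE sDE compl_compl ?sub.
have dc : downward_closed E P'.
  move=> h h' hE hh'; rewrite !inE => /andP[h'E h'P]; rewrite hE /=.
  by apply: (uc _ (E :\: h')) => //; apply: setDS.
have sub' : sub_SSG E P' by move=> H; rewrite inE => /andP[].
have sq' : square_ok P' eta'.
  move=> S S1 S2 S3; rewrite !inE => /andP[SE SP] /andP[S1E S1P] /andP[S2E S2P]
    /andP[S3E S3P] c1 c2 c3 c4 n12.
  rewrite /eta' addbC [in RHS]addbC.
  apply: sq => //; rewrite ?covers_compl //.
  by apply: contra n12 => /eqP h; apply/eqP; rewrite -(compl_compl S1E) h compl_compl.
have [c' hc'] := exists_c_down dc sub' sq'.
exists (fun H => c' (E :\: H)) => H H' HP H'P cHH'.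
have := hc' _ _ (inP' _ H'P) (inP' _ HP); rewrite covers_compl ?sub // => /(_ cHH').
rewrite /eta' !compl_compl ?sub // => ->.
by case: (c' _); case: (eta _ _).
Qed.

Import GRing.Theory.
Local Open Scope ring_scope.

Lemma comp0l (A : additiveCat) (a b c : Ob A) (g : Defs.Hom b c) :
  Defs.comp (0 : Defs.Hom a b) g = 0%R.
Proof.
apply: (@addrI _ (Defs.comp (0 : Defs.Hom a b) g)); by rewrite -compDl !addr0.
Qed.

Lemma comp0r (A : additiveCat) (a b c : Ob A) (f : Defs.Hom a b) :
  Defs.comp f (0 : Defs.Hom b c) = 0%R.
Proof.
apply: (@addrI _ (Defs.comp f (0 : Defs.Hom b c))); by rewrite -compDr !addr0.
Qed.

Lemma compNl (A : additiveCat) (a b c : Ob A) (f : Defs.Hom a b) (g : Defs.Hom b c) :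
  Defs.comp (- f)%R g = (- Defs.comp f g)%R.
Proof.
apply/eqP; rewrite -subr_eq0 opprK -compDl addrC subrr; exact/eqP/comp0l.
Qed.

Lemma compNr (A : additiveCat) (a b c : Ob A) (f : Defs.Hom a b) (g : Defs.Hom b c) :
  Defs.comp f (- g)%R = (- Defs.comp f g)%R.
Proof.
apply/eqP; rewrite -subr_eq0 opprK -compDr addrC subrr; exact/eqP/comp0r.
Qed.

Lemma comp_suml (A : additiveCat) (a b c : Ob A) (I : Type) (r : seq I)
  (Pr : pred I) (F : I -> Defs.Hom a b) (g : Defs.Hom b c) :
  Defs.comp (\sum_(i <- r | Pr i) F i)%R g = (\sum_(i <- r | Pr i) Defs.comp (F i) g)%R.
Proof.
apply: (big_morph (fun f => Defs.comp f g)); [exact: (fun x y => compDl x y g)|exact: comp0l].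
Qed.

Lemma comp_sumr (A : additiveCat) (a b c : Ob A) (I : Type) (r : seq I)
  (Pr : pred I) (f : Defs.Hom a b) (F : I -> Defs.Hom b c) :
  Defs.comp f (\sum_(i <- r | Pr i) F i)%R = (\sum_(i <- r | Pr i) Defs.comp f (F i))%R.
Proof.
apply: (big_morph (fun g => Defs.comp f g)); [exact: (fun x y => compDr f x y)|exact: comp0r].
Qed.

Lemma comp_sgnl (A : additiveCat) (a b c : Ob A) e (f : Defs.Hom a b) (g : Defs.Hom b c) :
  Defs.comp (sgn e f) g = sgn e (Defs.comp f g).
Proof. by case: e => //=; rewrite compNl. Qed.

Lemma comp_sgnr (A : additiveCat) (a b c : Ob A) e (f : Defs.Hom a b) (g : Defs.Hom b c) :
  Defs.comp f (sgn e g) = sgn e (Defs.comp f g).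
Proof. by case: e => //=; rewrite compNr. Qed.

Lemma sgn_sgn (A : additiveCat) (a b : Ob A) e1 e2 (f : Defs.Hom a b) :
  sgn e1 (sgn e2 f) = sgn (addb e1 e2) f.
Proof. by case: e1; case: e2 => //=; rewrite opprK. Qed.

Lemma collapse (A : additiveCat) (I : finType) (X : I -> Ob A) (b : Ob A)
  (i : I) (F : forall k, Defs.Hom (X k) b) :
  Defs.comp (binj i) (\sum_k Defs.comp (bproj k) (F k))%R = F i.
Proof.
rewrite comp_sumr (bigD1 i) //= big1 ?addr0.
  by rewrite -Defs.compA binj_proj comp1m.
move=> k nki; rewrite -Defs.compA binj_proj0 ?comp0l //.
by rewrite eq_sym.
Qed.

Lemma sgn_sum (A : additiveCat) (a b : Ob A) (I : Type) (r : seq I) (Pr : pred I)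
  e (F : I -> Defs.Hom a b) :
  sgn e (\sum_(i <- r | Pr i) F i) = \sum_(i <- r | Pr i) sgn e (F i).
Proof. by case: e => //=; rewrite sumrN. Qed.

Local Close Scope ring_scope.

Theorem corollary3p18 (V : finType) (E : {set V * V}) (P : {set {set V * V}})
    (A : additiveCat) (Fob : {set V * V} -> Ob A)
    (Fmor : forall H H' : {set V * V}, Defs.Hom (Fob H) (Fob H'))
    (eps1 eps2 : {set V * V} -> {set V * V} -> bool) :
  loopless E -> sub_SSG E P ->
  (downward_closed E P \/ upward_closed E P) ->
  is_functor P Fob Fmor ->
  sign_assignment P eps1 -> sign_assignment P eps2 ->
  cochain_iso (diff P Fob Fmor eps1) (diff P Fob Fmor eps2).
Proof.
move=> _ sub hcl _ s1 s2.
pose eta H H' := addb (eps1 H H') (eps2 H H').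
have sq : square_ok P eta.
  move=> S S1 S2 S3 p0 p1 p2 p3 c1 c2 c3 c4 n12.
  move: (s1 S S1 S2 S3 p0 p1 p2 p3 c1 c2 c3 c4 n12) (s2 S S1 S2 S3 p0 p1 p2 p3 c1 c2 c3 c4 n12).
  rewrite /eta.
  move: (eps1 S S1) (eps1 S1 S3) (eps1 S S2) (eps1 S2 S3)
        (eps2 S S1) (eps2 S1 S3) (eps2 S S2) (eps2 S2 S3).
  by do 8 case.
have [c hc] : exists c, cob_ok P eta c.
  by case: hcl => [dc|uc]; [exact: exists_c_down dc sub sq | exact: exists_c_up uc sub sq].
pose phi n : Defs.Hom (cochain P Fob n) (cochain P Fob n) :=
  (\sum_(i : Idx P n) Defs.comp (bproj i) (sgn (c (val i)) (binj i)))%R.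
exists phi, phi => n; split.
- rewrite /phi comp_suml -[RHS]bproj_inj_sum; apply: eq_bigr => i _.
  by rewrite Defs.compA comp_sgnl collapse sgn_sgn addbb.
- rewrite /phi comp_suml -[RHS]bproj_inj_sum; apply: eq_bigr => i _.
  by rewrite Defs.compA comp_sgnl collapse sgn_sgn addbb.
apply: (@eq_trans _ _ (\sum_(i : Idx P n) \sum_(j : Idx P n.+1 | covers (val i) (val j))
   Defs.comp (bproj i) (sgn (addb (c (val i)) (eps2 (val i) (val j)))
      (Defs.comp (Fmor (val i) (val j)) (binj j))))%R).
  rewrite /phi comp_suml; apply: eq_bigr => i _.
  rewrite Defs.compA comp_sgnl /diff.
  under eq_bigr => i' _ do rewrite -comp_sumr.
  rewrite collapse -comp_sumr; congr (Defs.comp _ _).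
  rewrite sgn_sum; apply: eq_bigr => j _.
  by rewrite comp_sgnl sgn_sgn.
rewrite /diff comp_suml; apply: eq_bigr => i _; rewrite comp_suml; apply: eq_bigr => j cov.
rewrite /phi !Defs.compA collapse; congr (Defs.comp _ _).
rewrite comp_sgnl comp_sgnr sgn_sgn; congr sgn.
have /andP[iP _] := valP i; have /andP[jP _] := valP j.
rewrite (hc _ _ iP jP cov) /eta.
by case: (c _); case: (eps1 _ _); case: (eps2 _ _).
Qed.
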